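(* Let $(\mathbb S,+,\cdot)$ be an S-Ring with Base Unit $A$, and let $m\in\mathbb S_0$ and $s\in\mathbb S$. Then there exist $x,y\in\mathbb S_0$ with $s=x-1+y\cdot A$, and for such $x,y$ one has $m\cdot s=m\cdot(x-y)+y-1+(m\cdot y)\cdot A$.
   Context: An S-Structure is a triple $(\mathbb S,+,\cdot)$ where $\mathbb S$ is a set and $+,\cdot$ are binary operations on $\mathbb S$ such that: $(\mathbb S,+)$ is a commutative group with identity $0$ (the inverse of $s$ is written $-s$, and $s-t:=s+(-t)$); $\mathbb S$ is closed under $\cdot$; and there exists $s\in\mathbb S$ with $0\cdot s\neq 0$ or $s\cdot 0\neq 0$. Multiplication binds tighter than addition. The structures considered come with a distinguished element of $\mathbb S$ denoted $1$. It is Commutative if $s\cdot t=t\cdot s$ for all $s,t$. For a Commutative S-Structure and $\alpha\in\mathbb S$, put $\mathbb S_\alpha=\{s\in\mathbb S:0\cdot s=s\cdot 0=\alpha\}$ and $\Lambda=\{\alpha\in\mathbb S:\mathbb S_\alpha\neq\emptyset\}$. Wheel Distributive: $s\cdot(t+r)+(s\cdot 0)=(s\cdot t)+(s\cdot r)$ for all $s,t,r\in\mathbb S$. S-Associative: for all $m,n\in\mathbb S_0$ and $s\in\mathbb S$, $m\cdot(n\cdot s)=(m\cdot n)\cdot s-([(m-1)\cdot(n-1)]\cdot(0\cdot s))$. Base: if $\mathbb S_0\neq\emptyset$ and $\alpha\in\Lambda$, $q\in\mathbb S_\alpha$ is a Base for $\mathbb S_\alpha$ if $q+\beta\in\mathbb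 S_\alpha$ for all $\beta\in\mathbb S_0$ and every $s\in\mathbb S_\alpha$ equals $q+\beta$ for some $\beta\in\mathbb S_0$. Coordinated: $\mathbb S_0\neq\emptyset$ and every $\mathbb S_\alpha$ with $\alpha\in\Lambda$ has a Base. Standard Bases: a Coordinated Commutative S-Structure has Standard Bases if there is a specified element $q_0(1)\in\mathbb S_1$ which is a Base for $\mathbb S_1$, and for every $\alpha\in\Lambda$ the element $q_0(\alpha):=\alpha\cdot(q_0(1)+1)-1$ lies in $\mathbb S_\alpha$ and is a Base for $\mathbb S_\alpha$. The Base Unit is $A:=q_0(1)+1$. An Essential S-Structure is an S-Structure that is Commutative, Wheel Distributive, S-Associative, has Standard Bases (in particular is Coordinated), satisfies $0,1\in\mathbb S_0$, and satisfies $\mathbb S_0=\{1\cdot x:x\in\mathbb S_0\}$. A Unity is an element $e\in\Lambda$ with $e\cdot s=s\cdot e=s$ for all $s\in\mathbb S$. An S-Ring is an Essential S-Structure which has a Unity. *)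

(* Defs.v *)
(* the additive commutative group (S,+) is a zmodType;
   the multiplication is an arbitrary binary operation, 1 a distinguished
   element, and q01 the specified Base q_0(1) of S_1 (Standard Bases). *)
From mathcomp Require Import all_boot all_algebra.
Set Implicit Arguments. Unset Strict Implicit. Unset Printing Implicit Defensive.
Import GRing.Theory.
Local Open Scope ring_scope.

Section SStructures.
Variables (T : zmodType) (mul : T -> T -> T) (one : T) (q01 : T).

(* S-Structure axiom: some s with 0*s <> 0 or s*0 <> 0 (closure is by typing) *)
Definition is_SStructure : Prop :=
  exists s, mul 0 s <> 0 \/ mul s 0 <> 0.

Definition Commutative : Prop := forall s t, mul s t = mul t s.

Definition Sa (alpha s : T) : Prop := mul 0 s = alpha /\ mul s 0 = alpha.

Definition Lam (alpha : T) : Prop := exists s, Sa alpha s.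

Definition WheelDistributive : Prop :=
  forall s t r, mul s (t + r) + mul s 0 = mul s t + mul s r.

Definition SAssociative : Prop :=
  forall m n s, Sa 0 m -> Sa 0 n ->
    mul m (mul n s) = mul (mul m n) s - mul (mul (m - one) (n - one)) (mul 0 s).

Definition is_Base (alpha q : T) : Prop :=
  Sa alpha q /\
  (forall b, Sa 0 b -> Sa alpha (q + b)) /\
  (forall s, Sa alpha s -> exists b, Sa 0 b /\ s = q + b).

Definition Coordinated : Prop :=
  (exists s, Sa 0 s) /\ (forall alpha, Lam alpha -> exists q, is_Base alpha q).

Definition q0 (alpha : T) : T := mul alpha (q01 + one) - one.

Definition StandardBases : Prop :=
  Coordinated /\ is_Base one q01 /\
  (forall alpha, Lam alpha -> is_Base alpha (q0 alpha)).

Definition BaseUnit : T := q01 + one.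

Definition Essential : Prop :=
  is_SStructure /\ Commutative /\ WheelDistributive /\ SAssociative /\
  StandardBases /\ Sa 0 0 /\ Sa 0 one /\
  (forall z, Sa 0 z <-> exists x, Sa 0 x /\ z = mul one x).

Definition is_Unity (e : T) : Prop :=
  Lam e /\ forall s, mul e s = s /\ mul s e = s.

Definition SRing : Prop := Essential /\ exists e, is_Unity e.

End SStructures.

(* Main.v *)
Require Import Defs.
From mathcomp Require Import all_boot all_algebra.
Local Open Scope ring_scope.
Import GRing.Theory.

Section Aux.
Variables (T : zmodType) (mul : T -> T -> T).
Hypothesis W : WheelDistributive mul.

Lemma addl a t r : mul a 0 = 0 -> mul a (t + r) = mul a t + mul a r.
Proof. by move=> h; rewrite -W h addr0. Qed.

Lemma oppl a t : mul a 0 = 0 -> mul a (- t) = - mul a t.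
Proof.
move=> h; apply/eqP; rewrite -subr_eq0 opprK -addl // addNr //.
by rewrite h.
Qed.

Lemma subl a t r : mul a 0 = 0 -> mul a (t - r) = mul a t - mul a r.
Proof. by move=> h; rewrite addl // oppl. Qed.
End Aux.

Lemma zm (T : zmodType) (a m c d y o : T) :
  a - m + (c - (d - y - (m - o))) = a - d + y - o + c.
Proof.
rewrite opprB opprB (addrC c) addrA; congr (_ + c).
rewrite addrA (addrA (a - m)) subrK.
rewrite addrACA (addrC (-o)) addrACA addrA.
done.
Qed.

Theorem proposition3p2p4 (T : zmodType) (mul : T -> T -> T) (one q01 : T) :
  SRing mul one q01 ->
  forall m s : T, Sa mul 0 m ->
    (exists x y : T, Sa mul 0 x /\ Sa mul 0 y /\
        s = x - one + mul y (BaseUnit one q01)) /\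
    (forall x y : T, Sa mul 0 x -> Sa mul 0 y ->
        s = x - one + mul y (BaseUnit one q01) ->
        mul m s = mul m (x - y) + y - one + mul (mul m y) (BaseUnit one q01)).
Proof.
move=> [[_ [C [W [SA [[_ [[[q1a q1b] _] Bs]] [[z00 _] [[o0 _] _]]]]]]] [e [[t [t0 _]] U]]].
move=> m s [m0 _].
have e0 : mul 0 e = 0 by case: (U 0).
have Ue s' : mul e s' = s' by case: (U s').
have Ue' s' : mul s' e = s' by case: (U s').
have N0 : mul (- one) 0 = 0 by rewrite C (oppl _ _ W) // o0 oppr0.
have O0 : mul one 0 = 0 by rewrite C.
have oo : mul one one = one.
  have := SA 0 e t (conj z00 z00) (conj e0 (etrans (C _ _) e0)).
  rewrite Ue e0 t0 Ue' => /eqP; rewrite eq_sym subr_eq addrC -subr_eq subrr eq_sym => /eqP h.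
  have : mul (0 - one) (e - one) = - one + mul one one.
    by rewrite sub0r (subl _ _ W) // (C _ e) Ue (C _ one) (oppl _ _ W) // opprK.
  rewrite h => hh; move/eqP: hh; rewrite eq_sym addrC subr_eq0 => /eqP.
  done.
have eo : e = one.
  have := SA 0 0 t (conj z00 z00) (conj z00 z00).
  rewrite z00 t0 e0 sub0r Ue' (oppl _ _ W) // (C _ one) (oppl _ _ W) // opprK oo.
  by move=> /eqP; rewrite eq_sym subr_eq0 => /eqP.
rewrite eo in Ue Ue' e0.
have Z0 s' : mul 0 (mul 0 s') = 0.
  have := SA 0 0 s' (conj z00 z00) (conj z00 z00).
  by rewrite z00 sub0r (oppl _ _ W) // (C _ one) (oppl _ _ W) // opprK oo Ue subrr.
have mC : mul m 0 = 0 by rewrite C.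
split.
  set a := mul 0 s.
  have ha : Sa mul 0 a by split; [exact: Z0 | rewrite C; exact: Z0].
  have La : Lam mul a by exists s; split => //; rewrite C.
  have [_ [_ B3]] := Bs a La.
  have [b [hb ->]] := B3 s (conj erefl (C _ _)).
  exists b, a; split => //; split => //.
  by rewrite /q0 /BaseUnit addrC addrA addrAC.
move=> x y [x0 _] [y0 _] ->.
have yC : mul y 0 = 0 by rewrite C.
rewrite (addl _ _ W) // (subl _ _ W) // Ue'.
rewrite (SA m y _ (conj m0 mC) (conj y0 yC)).
have -> : mul 0 (BaseUnit one q01) = one by rewrite /BaseUnit (addl _ _ W) // q1a o0 addr0.
rewrite Ue'.
have hm : mul (m - one) 0 = 0 by rewrite C (subl _ _ W) // m0 o0 subr0.
rewrite (subl _ _ W (m - one) y one hm) Ue' (C (m - one) y) (subl _ _ W y m one yC) Ue' (C y m).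
rewrite (subl _ _ W m x y mC).
exact: zm.
Qed.
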